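(* The following weakening rules are admissible in $\mathsf{G}(\mathbf{KT}^+_D)$: for all finite multisets $\Gamma,\Delta$ of formulas, every finite multiset $\Sigma$ of outmost-boxed formulas, every formula $\alpha$ and every $G\in\mathsf{Grp}$, if $\vdash\Sigma\mid\Gamma\Rightarrow\Delta$ then $\vdash\Sigma\mid\Gamma\Rightarrow\Delta,\alpha$, $\vdash\Sigma\mid\alpha,\Gamma\Rightarrow\Delta$, and $\vdash\Sigma,D_G\alpha\mid\Gamma\Rightarrow\Delta$.
   Context: Language: fix a finite nonempty set $\mathsf{Agt}$ of agents and a countable set $\mathsf{Prop}$ of propositional variables; $\mathsf{Grp}$ is the set of nonempty subsets of $\mathsf{Agt}$. Formulas: $\alpha::=p\mid\bot\mid\alpha\wedge\alpha\mid\alpha\vee\alpha\mid\alpha\rightarrow\alpha\mid\neg\alpha\mid D_G\alpha$ ($p\in\mathsf{Prop}$, $G\in\mathsf{Grp}$). Outmost-boxed formula: one of the form $D_G\gamma$. Calculus $\mathsf{G}(\mathbf{KT}^+_D)$ ($\vdash$ denotes derivability: root of a finite tree built from initial sequents by the rules): a T-sequent $\Sigma\mid\Gamma\Rightarrow\Delta$ consists of finite multisets $\Gamma,\Delta$ of formulas and a finite multiset $\Sigma$ of outmost-boxed formulas. Initial sequents: $\Sigma\mid\Gamma,p\Rightarrow p,\Delta$ ($p\in\mathsf{Prop}$) and $\Sigma\mid\bot,\Gamma\Rightarrow\Delta$. Propositional rules (with $\Sigma$ unchanged): $(R\wedge)$ from $\Sigma\mid\Gamma\Rightarrow\Delta,\alpha_1$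 and $\Sigma\mid\Gamma\Rightarrow\Delta,\alpha_2$ infer $\Sigma\mid\Gamma\Rightarrow\Delta,\alpha_1\wedge\alpha_2$; $(L\wedge)$ from $\Sigma\mid\alpha_1,\alpha_2,\Gamma\Rightarrow\Delta$ infer $\Sigma\mid\alpha_1\wedge\alpha_2,\Gamma\Rightarrow\Delta$; $(R\vee)$ from $\Sigma\mid\Gamma\Rightarrow\Delta,\alpha_1,\alpha_2$ infer $\Sigma\mid\Gamma\Rightarrow\Delta,\alpha_1\vee\alpha_2$; $(L\vee)$ from $\Sigma\mid\alpha_1,\Gamma\Rightarrow\Delta$ and $\Sigma\mid\alpha_2,\Gamma\Rightarrow\Delta$ infer $\Sigma\mid\alpha_1\vee\alpha_2,\Gamma\Rightarrow\Delta$; $(R\rightarrow)$ from $\Sigma\mid\alpha_1,\Gamma\Rightarrow\Delta,\alpha_2$ infer $\Sigma\mid\Gamma\Rightarrow\Delta,\alpha_1\rightarrow\alpha_2$; $(L\rightarrow)$ from $\Sigma\mid\Gamma\Rightarrow\Delta,\alpha_1$ and $\Sigma\mid\alpha_2,\Gamma\Rightarrow\Delta$ infer $\Sigma\mid\alpha_1\rightarrow\alpha_2,\Gamma\Rightarrow\Delta$; $(R\neg)$ from $\Sigma\mid\alpha,\Gamma\Rightarrow\Delta$ infer $\Sigma\mid\Gamma\Rightarrow\Delta,\neg\alpha$; $(L\neg)$ from $\Sigma\mid\Gamma\Rightarrow\Delta,\alpha$ infer $\Sigma\mid\neg\alpha,\Gamma\Rightarrow\Delta$. Modal rules: $(D_K^+)$: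 from $\emptyset\mid\alpha_1,\dots,\alpha_n\Rightarrow\beta$ ($n\ge0$) infer $\Sigma,D_{G_1}\alpha_1,\dots,D_{G_n}\alpha_n\mid\Pi\Rightarrow D_G\beta,\Omega$, provided $G_i\subseteq G$ for all $i$, $\Sigma$ consists only of formulas $D_H\gamma$ with $H\not\subseteq G$, $\Pi$ only of propositional variables and $\bot$, and $\Omega$ only of propositional variables, $\bot$ and outmost-boxed formulas; $(D_T^+)$: from $D_G\alpha,\Sigma\mid\Gamma,\alpha\Rightarrow\Delta$ infer $\Sigma\mid\Gamma,D_G\alpha\Rightarrow\Delta$. *)

(* Defs.v *)
From mathcomp Require Import all_boot.
From Stdlib Require Import List Permutation.

Set Implicit Arguments.
Unset Strict Implicit.
Unset Printing Implicit Defensive.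

Section KTD.
Variables (Agt : finType) (Prp : countType).

Definition grp := {G : {set Agt} | G != set0}.
Definition grp_set (G : grp) : {set Agt} := proj1_sig G.

Inductive form : Type :=
| Var  : Prp -> form
| Bot  : form
| And  : form -> form -> form
| Or   : form -> form -> form
| Imp  : form -> form -> form
| Neg  : form -> form
| Dbox : grp -> form -> form.

(* An outmost-boxed formula D_G g is represented by the pair (G, g). *)
Definition boxed := (grp * form)%type.
Definition unbox (b : boxed) : form := Dbox b.1 b.2.

Definition atomic_or_bot (f : form) : Prop :=
  match f with Var _ | Bot => True | _ => False end.
Definition atomic_bot_or_boxed (f : form) : Prop :=
  match f with Var _ | Bot | Dbox _ _ => True | _ => False end.

(* Multisets are represented by lists; every rule conclusion is taken up to
   permutation of each of the three components (multiset equality). *)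
Definition seq_eq (S1 : list boxed) (G1 D1 : list form)
                  (S2 : list boxed) (G2 D2 : list form) : Prop :=
  Permutation S1 S2 /\ Permutation G1 G2 /\ Permutation D1 D2.

(* derivable Sig Gam Del  :=  |- Sig | Gam => Del  in G(KT+_D) *)
Inductive derivable : list boxed -> list form -> list form -> Prop :=
| d_init S G D p S' G' D' :
    seq_eq S (Var p :: G) (Var p :: D) S' G' D' -> derivable S' G' D'
| d_bot S G D S' G' D' :
    seq_eq S (Bot :: G) D S' G' D' -> derivable S' G' D'
| d_Rand S G D a1 a2 S' G' D' :
    derivable S G (a1 :: D) -> derivable S G (a2 :: D) ->
    seq_eq S G (And a1 a2 :: D) S' G' D' -> derivable S' G' D'
| d_Land S G D a1 a2 S' G' D' :
    derivable S (a1 :: a2 :: G) D ->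
    seq_eq S (And a1 a2 :: G) D S' G' D' -> derivable S' G' D'
| d_Ror S G D a1 a2 S' G' D' :
    derivable S G (a1 :: a2 :: D) ->
    seq_eq S G (Or a1 a2 :: D) S' G' D' -> derivable S' G' D'
| d_Lor S G D a1 a2 S' G' D' :
    derivable S (a1 :: G) D -> derivable S (a2 :: G) D ->
    seq_eq S (Or a1 a2 :: G) D S' G' D' -> derivable S' G' D'
| d_Rimp S G D a1 a2 S' G' D' :
    derivable S (a1 :: G) (a2 :: D) ->
    seq_eq S G (Imp a1 a2 :: D) S' G' D' -> derivable S' G' D'
| d_Limp S G D a1 a2 S' G' D' :
    derivable S G (a1 :: D) -> derivable S (a2 :: G) D ->
    seq_eq S (Imp a1 a2 :: G) D S' G' D' -> derivable S' G' D'
| d_Rneg S G D a S' G' D' :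
    derivable S (a :: G) D ->
    seq_eq S G (Neg a :: D) S' G' D' -> derivable S' G' D'
| d_Lneg S G D a S' G' D' :
    derivable S G (a :: D) ->
    seq_eq S (Neg a :: G) D S' G' D' -> derivable S' G' D'
| d_DK S B Pi Om (Gr : grp) b S' G' D' :
    derivable nil (map snd B) (b :: nil) ->
    (forall x, In x B -> grp_set x.1 \subset grp_set Gr) ->
    (forall x, In x S -> ~~ (grp_set x.1 \subset grp_set Gr)) ->
    (forall f, In f Pi -> atomic_or_bot f) ->
    (forall f, In f Om -> atomic_bot_or_boxed f) ->
    seq_eq (S ++ B) Pi (Dbox Gr b :: Om) S' G' D' -> derivable S' G' D'
| d_DT S G D (Gr : grp) a S' G' D' :
    derivable ((Gr, a) :: S) (a :: G) D ->
    seq_eq S (Dbox Gr a :: G) D S' G' D' -> derivable S' G' D'.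

End KTD.

(* Main.v *)
Require Import Defs.
From mathcomp Require Import all_boot.
From Stdlib Require Import List Permutation.

Set Implicit Arguments.
Section W.
Variables (Agt : finType) (Prp : countType).
Notation form := (form Agt Prp).
Notation boxed := (boxed Agt Prp).

Lemma seq_eq_trans (S G D S1 G1 D1 S2 G2 D2 : list _) :
  @seq_eq Agt Prp S G D S1 G1 D1 -> Permutation S1 S2 -> Permutation G1 G2 ->
  Permutation D1 D2 -> seq_eq S G D S2 G2 D2.
Proof.
  move=> [h1 [h2 h3]] p1 p2 p3; split; [|split]; eapply Permutation_trans; eauto.
Qed.

Lemma der_perm S G D S' G' D' :
  @derivable Agt Prp S G D -> Permutation S S' -> Permutation G G' ->
  Permutation D D' -> derivable S' G' D'.
Proof.
  move=> d p1 p2 p3; destruct d.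
  - eapply d_init; eapply seq_eq_trans; eassumption.
  - eapply d_bot; eapply seq_eq_trans; eassumption.
  - eapply d_Rand; [exact d1|exact d2|eapply seq_eq_trans; eassumption].
  - eapply d_Land; [exact d|eapply seq_eq_trans; eassumption].
  - eapply d_Ror; [exact d|eapply seq_eq_trans; eassumption].
  - eapply d_Lor; [exact d1|exact d2|eapply seq_eq_trans; eassumption].
  - eapply d_Rimp; [exact d|eapply seq_eq_trans; eassumption].
  - eapply d_Limp; [exact d1|exact d2|eapply seq_eq_trans; eassumption].
  - eapply d_Rneg; [exact d|eapply seq_eq_trans; eassumption].
  - eapply d_Lneg; [exact d|eapply seq_eq_trans; eassumption].
  - eapply d_DK; [exact d|eassumption|eassumption|eassumption|eassumption|
                  eapply seq_eq_trans; eassumption].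
  - eapply d_DT; [exact d|eapply seq_eq_trans; eassumption].
Qed.

Lemma P2 {T} (x f : T) D D' : Permutation (x :: D) D' ->
  Permutation (x :: f :: D) (f :: D').
Proof. move=> p; eapply Permutation_trans; [apply perm_swap|by apply perm_skip]. Qed.

Lemma P0 {T} (f : T) D D' : Permutation D D' -> Permutation (f :: D) (f :: D').
Proof. by apply perm_skip. Qed.

Lemma seqD S G D S' G' D' x f : @seq_eq Agt Prp S G (x :: D) S' G' D' ->
  seq_eq S G (x :: f :: D) S' G' (f :: D').
Proof. move=> [h1 [h2 h3]]; split; [|split]; auto using P2. Qed.

Lemma seqD0 S G D S' G' D' f : @seq_eq Agt Prp S G D S' G' D' ->
  seq_eq S G (f :: D) S' G' (f :: D').
Proof. move=> [h1 [h2 h3]]; split; [|split]; auto using P0. Qed.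

Lemma seqG S G D S' G' D' x f : @seq_eq Agt Prp S (x :: G) D S' G' D' ->
  seq_eq S (x :: f :: G) D S' (f :: G') D'.
Proof. move=> [h1 [h2 h3]]; split; [|split]; auto using P2. Qed.

Lemma seqG0 S G D S' G' D' f : @seq_eq Agt Prp S G D S' G' D' ->
  seq_eq S (f :: G) D S' (f :: G') D'.
Proof. move=> [h1 [h2 h3]]; split; [|split]; auto using P0. Qed.

Lemma seqS0 S G D S' G' D' f : @seq_eq Agt Prp S G D S' G' D' ->
  seq_eq (f :: S) G D (f :: S') G' D'.
Proof. move=> [h1 [h2 h3]]; split; [|split]; auto using P0. Qed.

Lemma sw {T} (x y : T) l : Permutation (x :: y :: l) (y :: x :: l).
Proof. apply perm_swap. Qed.

Lemma wR_at f S G D : atomic_bot_or_boxed f ->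
  @derivable Agt Prp S G D -> derivable S G (f :: D).
Proof.
  move=> hf d; induction d.
  - eapply d_init; eapply seqD; eassumption.
  - eapply d_bot; eapply seqD0; eassumption.
  - eapply d_Rand; [eapply der_perm; [exact IHd1|..]|eapply der_perm; [exact IHd2|..]
      |eapply seqD; eassumption]; auto using sw.
  - eapply d_Land; [exact IHd|eapply seqD0; eassumption].
  - eapply d_Ror; [eapply der_perm; [exact IHd|..]|eapply seqD; eassumption].
    + by [].
    + by [].
    + eapply Permutation_trans; [apply sw|apply perm_skip; apply sw].
  - eapply d_Lor; [exact IHd1|exact IHd2|eapply seqD0; eassumption].
  - eapply d_Rimp; [eapply der_perm; [exact IHd|..]|eapply seqD; eassumption]; auto using sw.
  - eapply d_Limp; [eapply der_perm; [exact IHd1|..]|exact IHd2|eapply seqD0; eassumption];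
      auto using sw.
  - eapply d_Rneg; [exact IHd|eapply seqD; eassumption].
  - eapply d_Lneg; [eapply der_perm; [exact IHd|..]|eapply seqD0; eassumption]; auto using sw.
  - eapply d_DK with (Om := f :: Om); [exact d|eassumption|eassumption|eassumption| |
      eapply seqD; eassumption].
    move=> g /= [<-|]; auto.
  - eapply d_DT; [exact IHd|eapply seqD0; eassumption].
Qed.

Lemma wL_at f S G D : atomic_or_bot f ->
  @derivable Agt Prp S G D -> derivable S (f :: G) D.
Proof.
  move=> hf d; induction d.
  - eapply d_init; eapply seqG; eassumption.
  - eapply d_bot; eapply seqG; eassumption.
  - eapply d_Rand; [exact IHd1|exact IHd2|eapply seqG0; eassumption].
  - eapply d_Land; [eapply der_perm; [exact IHd|..]|eapply seqG; eassumption].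
    + by [].
    + eapply Permutation_trans; [apply sw|apply perm_skip; apply sw].
    + by [].
  - eapply d_Ror; [exact IHd|eapply seqG0; eassumption].
  - eapply d_Lor; [eapply der_perm; [exact IHd1|..]|eapply der_perm; [exact IHd2|..]
      |eapply seqG; eassumption]; auto using sw.
  - eapply d_Rimp; [eapply der_perm; [exact IHd|..]|eapply seqG0; eassumption]; auto using sw.
  - eapply d_Limp; [exact IHd1|eapply der_perm; [exact IHd2|..]|eapply seqG; eassumption];
      auto using sw.
  - eapply d_Rneg; [eapply der_perm; [exact IHd|..]|eapply seqG0; eassumption]; auto using sw.
  - eapply d_Lneg; [exact IHd|eapply seqG; eassumption].
  - eapply d_DK with (Pi := f :: Pi); [exact d|eassumption|eassumption| |eassumption|
      eapply seqG0; eassumption].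
    move=> g /= [<-|]; auto.
  - eapply d_DT; [eapply der_perm; [exact IHd|..]|eapply seqG; eassumption]; auto using sw.
Qed.

Lemma wS (H : grp Agt) (a : form) :
  (forall S G D, derivable S G D -> derivable S (a :: G) D) ->
  forall S G D, derivable S G D -> derivable ((H, a) :: S) G D.
Proof.
  move=> HL S0 G0 D0 d; induction d.
  - eapply d_init; eapply seqS0; eassumption.
  - eapply d_bot; eapply seqS0; eassumption.
  - eapply d_Rand; [exact IHd1|exact IHd2|eapply seqS0; eassumption].
  - eapply d_Land; [exact IHd|eapply seqS0; eassumption].
  - eapply d_Ror; [exact IHd|eapply seqS0; eassumption].
  - eapply d_Lor; [exact IHd1|exact IHd2|eapply seqS0; eassumption].
  - eapply d_Rimp; [exact IHd|eapply seqS0; eassumption].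
  - eapply d_Limp; [exact IHd1|exact IHd2|eapply seqS0; eassumption].
  - eapply d_Rneg; [exact IHd|eapply seqS0; eassumption].
  - eapply d_Lneg; [exact IHd|eapply seqS0; eassumption].
  - case hs: (grp_set H \subset grp_set Gr).
    + apply (@d_DK Agt Prp S ((H, a) :: B) Pi Om Gr b).
      * simpl; apply HL; exact d.
      * move=> x /= [<-|]; auto.
      * exact H1.
      * exact H2.
      * exact H3.
      * case: H4 => h1 [h2 h3]; split; [|split] => //.
        eapply Permutation_trans; [apply Permutation_sym, Permutation_middle|by apply perm_skip].
    + apply (@d_DK Agt Prp ((H, a) :: S) B Pi Om Gr b).
      * exact d.
      * exact H0.
      * move=> x /= [<-|]; [by rewrite hs|auto].
      * exact H2.
      * exact H3.
      * by apply seqS0.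
  - eapply d_DT; [eapply der_perm; [exact IHd|..]|eapply seqS0; eassumption]; auto using sw.
Qed.

Lemma seq_refl S G D : @seq_eq Agt Prp S G D S G D.
Proof. split; [|split]; apply Permutation_refl. Qed.

Lemma wF (a : form) : forall S G D, derivable S G D ->
  derivable S (a :: G) D /\ derivable S G (a :: D).
Proof.
  induction a as [p| |a1 IH1 a2 IH2|a1 IH1 a2 IH2|a1 IH1 a2 IH2|a1 IH1|H a1 IH1]
    => S G D d.
  - split; [apply wL_at|apply wR_at] => //.
  - split; [apply wL_at|apply wR_at] => //.
  - split.
    + eapply d_Land; [exact (proj1 (IH1 _ _ _ (proj1 (IH2 _ _ _ d))))|apply seq_refl].
    + eapply d_Rand; [exact (proj2 (IH1 _ _ _ d))|exact (proj2 (IH2 _ _ _ d))|apply seq_refl].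
  - split.
    + eapply d_Lor; [exact (proj1 (IH1 _ _ _ d))|exact (proj1 (IH2 _ _ _ d))|apply seq_refl].
    + eapply d_Ror; [exact (proj2 (IH1 _ _ _ (proj2 (IH2 _ _ _ d))))|apply seq_refl].
  - split.
    + eapply d_Limp; [exact (proj2 (IH1 _ _ _ d))|exact (proj1 (IH2 _ _ _ d))|apply seq_refl].
    + eapply d_Rimp; [exact (proj1 (IH1 _ _ _ (proj2 (IH2 _ _ _ d))))|apply seq_refl].
  - split.
    + eapply d_Lneg; [exact (proj2 (IH1 _ _ _ d))|apply seq_refl].
    + eapply d_Rneg; [exact (proj1 (IH1 _ _ _ d))|apply seq_refl].
  - split.
    + eapply d_DT; [|apply seq_refl].
      apply (wS H (fun S G D d => proj1 (IH1 S G D d))).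
      exact (proj1 (IH1 _ _ _ d)).
    + by apply wR_at.
Qed.
End W.

Theorem proposition6p8 (Agt : finType) (Prp : countType) :
  (0 < #|Agt|)%N ->
  forall (Sig : list (boxed Agt Prp)) (Gam Del : list (form Agt Prp))
         (a : form Agt Prp) (G : grp Agt),
    derivable Sig Gam Del ->
    derivable Sig Gam (Del ++ a :: nil) /\
    derivable Sig (a :: Gam) Del /\
    derivable (Sig ++ (G, a) :: nil) Gam Del.
Proof.
  move=> _ Sig Gam Del a G d.
  have [hl hr] := wF a d.
  split; [|split] => //.
  - eapply der_perm; [exact hr|apply Permutation_refl|apply Permutation_refl|].
    apply Permutation_cons_append.
  - eapply der_perm; [exact (wS G (fun S G D d => proj1 (wF a d)) d)|
      |apply Permutation_refl|apply Permutation_refl].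
    apply Permutation_cons_append.
Qed.
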